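(* Every point of the interval $[m,M]$ is an accumulation point of $(b_n)_{n\ge1}$, where $m=\inf\{b_n:n\ge1\}$ and $M=\sup\{b_n:n\ge1\}$. In particular $(b_n)_{n\ge1}$ is dense in $[m,M]$ and its set of accumulation points is exactly $[m,M]$.
   Context: Fix integers $p\ge 3$ and $2\le s<p$, and a set $A\subset\{0,1,\dots,p-1\}$ with $\#A=s$. Let $h:\{0,1,\dots,s-1\}\to A$ be the unique strictly increasing bijection. For a positive integer $n$ with base-$s$ expansion $n=\sum_{i=0}^k\varepsilon_i s^i$ ($\varepsilon_i\in\{0,\dots,s-1\}$, $\varepsilon_k\ne 0$), put $a_n=\sum_{i=0}^k h(\varepsilon_i)p^i$. Let $b_n=a_n/n^{\log_s p}$ for $n\ge1$. An accumulation point of $(b_n)$ is a limit of $b_{n_k}$ along a strictly increasing sequence of indices $(n_k)$. *)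

(* Defs.v *)
From Stdlib Require Import Reals Lra Lia Arith List.
Open Scope R_scope.

(* Auxiliary recursion with fuel: for n >= 1 with base-s digits eps_0..eps_k,
   a_aux s p h fuel n = sum_{i=0}^k h(eps_i) p^i  provided fuel >= number of digits. *)
Fixpoint a_aux (s p : nat) (h : nat -> nat) (fuel n : nat) : nat :=
  match fuel with
  | O => O
  | S f => if Nat.eqb n 0 then O
           else (h (Nat.modulo n s) + p * a_aux s p h f (Nat.div n s))%nat
  end.

(* a_n = sum_i h(eps_i) p^i where n = sum_i eps_i s^i (fuel n is enough as s >= 2). *)
Definition a_seq (s p : nat) (h : nat -> nat) (n : nat) : nat := a_aux s p h n n.

Definition b_seq (s p : nat) (h : nat -> nat) (n : nat) : R :=
  INR (a_seq s p h n) / Rpower (INR n) (ln (INR p) / ln (INR s)).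

Definition acc_point (u : nat -> R) (x : R) : Prop :=
  exists phi : nat -> nat,
    (forall k, (phi k < phi (S k))%nat) /\ (forall k, (1 <= phi k)%nat) /\
    Un_cv (fun k => u (phi k)) x.

Definition range1 (u : nat -> R) (y : R) : Prop := exists n, (1 <= n)%nat /\ y = u n.

Definition is_glb (E : R -> Prop) (m : R) : Prop :=
  (forall y, E y -> m <= y) /\ (forall l, (forall y, E y -> l <= y) -> l <= m).

(* Main.v *)
Require Import Defs.
From Stdlib Require Import Reals List Lra Lia Classical ClassicalEpsilon.
Open Scope R_scope.

Section S.
Variables (s p : nat) (h : nat -> nat).
Hypothesis Hs2 : (2 <= s)%nat.
Hypothesis Hsp : (s < p)%nat.
Hypothesis Hh_inc : forall i j, (i < j)%nat -> (j < s)%nat -> (h i < h j)%nat.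
Hypothesis Hhp : forall i, (i < s)%nat -> (h i < p)%nat.

Lemma aux_stab : forall f g n, (n <= f)%nat -> (n <= g)%nat -> a_aux s p h f n = a_aux s p h g n.
Proof.
  induction f as [|f IH]; intros g n Hf Hg.
  - assert (n = 0%nat) by lia. subst. destruct g; reflexivity.
  - destruct g as [|g]. { assert (n = 0%nat) by lia. subst. reflexivity. }
    simpl. destruct (Nat.eqb n 0) eqn:E; [reflexivity|].
    apply Nat.eqb_neq in E.
    assert (Hd : (n / s < n)%nat) by (apply Nat.div_lt; lia).
    rewrite (IH g); [reflexivity|lia|lia].
Qed.

Notation A := (a_seq s p h).

Lemma A0 : A 0 = 0%nat.
Proof. reflexivity. Qed.

Lemma A_rec : forall n, (1 <= n)%nat -> A n = (h (n mod s) + p * A (n / s))%nat.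
Proof.
  intros n Hn. unfold a_seq. destruct n as [|n]; [lia|].
  simpl a_aux at 1. replace (Nat.eqb (S n) 0) with false by reflexivity.
  assert (Hd : (S n / s < S n)%nat) by (apply Nat.div_lt; lia).
  rewrite (aux_stab n (S n / s)); [reflexivity|lia|lia].
Qed.

Lemma A_qd : forall q d, (d < s)%nat -> (1 <= q * s + d)%nat -> A (q * s + d) = (h d + p * A q)%nat.
Proof.
  intros q d Hd H1. rewrite A_rec by lia.
  rewrite <- (Nat.mod_unique (q*s+d) s q d) by lia.
  rewrite <- (Nat.div_unique (q*s+d) s q d) by lia. reflexivity.
Qed.

Lemma A_Dv : forall v, (1 <= v)%nat -> ((p-1) * A (v-1) + h (s-1) <= (p-1) * A v)%nat.
Proof.
  intro v. induction v as [v IH] using (well_founded_induction Wf_nat.lt_wf). intro Hv.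
  destruct (Nat.eq_dec v 1) as [E|E].
  - subst. replace (1-1)%nat with 0%nat by lia. rewrite A0.
    assert (E1 : A 1 = h 1) by (pose proof (A_qd 0 1 ltac:(lia) ltac:(lia)) as X; simpl in X; rewrite X; rewrite A0; lia).
    rewrite E1.
    assert (h 0 < h 1)%nat by (apply Hh_inc; lia).
    assert (h (s-1) < p)%nat by (apply Hhp; lia). nia.
  - pose proof (Nat.div_mod_eq v s) as Hdm.
    pose proof (Nat.mod_upper_bound v s ltac:(lia)) as Hmu.
    set (q := (v / s)%nat) in *. set (d := (v mod s)%nat) in *.
    destruct (Nat.eq_dec d 0) as [D|D].
    + assert (Hq : (1 <= q)%nat) by (destruct q; lia).
      assert (Hqv : (q < v)%nat) by (apply Nat.div_lt; lia).
      specialize (IH q Hqv Hq).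
      replace (v - 1)%nat with ((q-1) * s + (s-1))%nat by nia.
      rewrite A_qd by nia.
      replace v with (q * s + 0)%nat by nia. rewrite A_qd by nia.
      nia.
    + replace (v - 1)%nat with (q * s + (d-1))%nat by nia.
      rewrite A_qd by nia.
      replace v with (q * s + d)%nat by nia. rewrite A_qd by nia.
      assert (h (d-1) < h d)%nat by (apply Hh_inc; lia).
      assert (h (s-1) < p)%nat by (apply Hhp; lia). nia.
Qed.

Lemma A_mono : forall n, (A n < A (S n))%nat.
Proof.
  intro n. pose proof (A_Dv (S n) ltac:(lia)) as H.
  replace (S n - 1)%nat with n in H by lia.
  assert (h 0 < h (s-1))%nat by (apply Hh_inc; lia). nia.
Qed.

Lemma A_Xk : forall v k, (1 <= v)%nat -> ((p-1) * A (v * s^k - 1) + h (s-1) <= p^k * ((p-1) * A v))%nat.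
Proof.
  intros v k Hv. induction k as [|k IH].
  - simpl. rewrite Nat.mul_1_r, Nat.add_0_r. apply A_Dv; lia.
  - assert (Hpos : (1 <= s^k)%nat) by (apply Nat.neq_0_lt_0, Nat.pow_nonzero; lia).
    replace (v * s ^ S k - 1)%nat with ((v * s^k - 1) * s + (s-1))%nat.
    2:{ rewrite Nat.pow_succ_r'. nia. }
    rewrite A_qd by nia. rewrite Nat.pow_succ_r'. nia.
Qed.

End S.

Lemma exp_le_mono : forall x y, x <= y -> exp x <= exp y.
Proof. intros x y H. destruct (Rle_lt_or_eq_dec _ _ H) as [H'|H'].
  - left; apply exp_increasing; auto. - subst; lra. Qed.

Lemma ln_le_mono : forall x y, 0 < x -> x <= y -> ln x <= ln y.
Proof. intros x y Hx H. destruct (Rle_lt_or_eq_dec _ _ H) as [H'|H'].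
  - left; apply ln_increasing; auto. - subst; lra. Qed.

Lemma ln_1x : forall x, 0 < x -> ln (1 + x) <= x.
Proof. intros x Hx. pose proof (exp_ineq1_le x).
  rewrite <- (ln_exp x) at 2. apply ln_le_mono; lra. Qed.

Section R.
Variables (s p : nat) (h : nat -> nat).
Hypothesis Hs2 : (2 <= s)%nat.
Hypothesis Hsp : (s < p)%nat.
Hypothesis Hh_inc : forall i j, (i < j)%nat -> (j < s)%nat -> (h i < h j)%nat.
Hypothesis Hhp : forall i, (i < s)%nat -> (h i < p)%nat.

Definition al := ln (INR p) / ln (INR s).
Definition P (n : nat) := Rpower (INR n) al.
Notation A := (a_seq s p h).
Notation b := (b_seq s p h).

Lemma INR_s : 2 <= INR s. Proof. replace 2 with (INR 2) by (simpl; lra). apply le_INR; lia. Qed.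
Lemma INR_p : 3 <= INR p. Proof. replace 3 with (INR 3) by (simpl; lra). apply le_INR; lia. Qed.
Lemma lns_pos : 0 < ln (INR s).
Proof. rewrite <- ln_1. apply ln_increasing; pose proof INR_s; lra. Qed.
Lemma lnp_pos : 0 < ln (INR p).
Proof. rewrite <- ln_1. apply ln_increasing; pose proof INR_p; lra. Qed.
Lemma al_pos : 0 < al.
Proof. unfold al. pose proof lns_pos; pose proof lnp_pos. apply Rdiv_lt_0_compat; lra. Qed.

Lemma P_pos : forall n, 0 < P n.
Proof. intro n. unfold P, Rpower. apply exp_pos. Qed.

Lemma INR_pos : forall n, (1 <= n)%nat -> 1 <= INR n.
Proof. intros n H. replace 1 with (INR 1) by reflexivity. apply le_INR; lia. Qed.

Lemma P_mono : forall m n, (1 <= m)%nat -> (m <= n)%nat -> P m <= P n.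
Proof. intros m n H1 H2. unfold P, Rpower. apply exp_le_mono.
  apply Rmult_le_compat_l. left; apply al_pos.
  apply ln_le_mono. pose proof (INR_pos m H1); lra. apply le_INR; lia. Qed.

Lemma P_1 : P 1 = 1.
Proof. unfold P, Rpower. simpl INR. rewrite ln_1, Rmult_0_r, exp_0. reflexivity. Qed.

Lemma P_ge1 : forall n, (1 <= n)%nat -> 1 <= P n.
Proof. intros n H. rewrite <- P_1. apply P_mono; lia. Qed.

Lemma P_mul_s : forall q, (1 <= q)%nat -> P (q * s) = INR p * P q.
Proof. intros q Hq. unfold P, Rpower. rewrite mult_INR.
  pose proof (INR_pos q Hq). pose proof INR_s. pose proof INR_p.
  rewrite ln_mult by lra. rewrite Rmult_plus_distr_l, exp_plus.
  replace (al * ln (INR s)) with (ln (INR p)).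
  2:{ unfold al. field. pose proof lns_pos; lra. }
  rewrite exp_ln by lra. ring. Qed.

Lemma P_pow : forall v k, (1 <= v)%nat -> P (v * s^k) = INR p ^ k * P v.
Proof. intros v k Hv. induction k as [|k IH].
  - simpl. rewrite Nat.mul_1_r. ring.
  - rewrite Nat.pow_succ_r', Nat.mul_assoc, (Nat.mul_comm v s), <- Nat.mul_assoc, (Nat.mul_comm s).
    rewrite P_mul_s. rewrite IH. simpl. ring.
    assert (1 <= s^k)%nat by (apply Nat.neq_0_lt_0, Nat.pow_nonzero; lia). nia. Qed.

Lemma P_ratio : forall n, (1 <= n)%nat -> (1 - al / INR n) * P (S n) <= P n.
Proof. intros n Hn. pose proof (INR_pos n Hn) as Hn'.
  unfold P, Rpower.
  assert (E : exp (al * ln (INR n)) = exp (al * ln (INR (S n))) * exp (al * (ln (INR n) - ln (INR (S n))))).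
  { rewrite <- exp_plus. f_equal. ring. }
  rewrite E. rewrite Rmult_comm. apply Rmult_le_compat_l. left; apply exp_pos.
  eapply Rle_trans; [|apply exp_ineq1_le].
  assert (L : ln (INR (S n)) - ln (INR n) <= / INR n).
  { rewrite S_INR. replace (INR n + 1) with (INR n * (1 + / INR n)) by (field; lra).
    rewrite ln_mult by (try lra; assert (0 < / INR n) by (apply Rinv_0_lt_compat; lra); lra).
    pose proof (ln_1x (/ INR n) ltac:(apply Rinv_0_lt_compat; lra)). lra. }
  pose proof al_pos.
  assert (al * (ln (INR (S n)) - ln (INR n)) <= al / INR n).
  { unfold Rdiv. apply Rmult_le_compat_l; lra. }
  lra. Qed.

Lemma A_bound : forall n, (1 <= n)%nat -> INR (A n) + 1 <= INR p * P n.
Proof.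
  intro n. induction n as [n IH] using (well_founded_induction Wf_nat.lt_wf). intro Hn.
  pose proof (Nat.div_mod_eq n s) as Hdm.
  pose proof (Nat.mod_upper_bound n s ltac:(lia)) as Hmu.
  rewrite (A_rec s p h Hs2) by lia.
  set (q := (n / s)%nat) in *. set (d := (n mod s)%nat) in *.
  pose proof (Hhp d Hmu) as Hd0. assert (Hd : INR (h d) + 1 <= INR p) by (rewrite <- S_INR; apply le_INR; lia).
  rewrite plus_INR, mult_INR.
  destruct (Nat.eq_dec q 0) as [Q|Q].
  - rewrite Q. rewrite (A0 s p h). simpl (INR 0). pose proof (P_ge1 n Hn).
    pose proof INR_p. nra.
  - assert (Hqv : (q < n)%nat) by (apply Nat.div_lt; lia).
    specialize (IH q Hqv ltac:(lia)).
    assert (P (q * s) <= P n) by (apply P_mono; nia).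
    rewrite P_mul_s in H by lia.
    pose proof INR_p. nra.
Qed.

Lemma div_nonneg : forall x y, 0 <= x -> 0 < y -> 0 <= x / y.
Proof. intros x y Hx Hy. unfold Rdiv. apply Rmult_le_pos; [lra|left; apply Rinv_0_lt_compat; lra]. Qed.

Lemma bP : forall n, b n * P n = INR (A n).
Proof. intro n. unfold b_seq. fold al. fold (P n). pose proof (P_pos n). field. lra. Qed.

Lemma b_nonneg : forall n, 0 <= b n.
Proof. intro n. unfold b_seq. apply div_nonneg. apply pos_INR. apply P_pos. Qed.

Lemma le_by_P : forall x y n, x * P n <= y * P n -> x <= y.
Proof. intros x y n H. pose proof (P_pos n). nra. Qed.

Lemma b_lt_p : forall n, (1 <= n)%nat -> b n <= INR p.
Proof. intros n Hn. apply (le_by_P _ _ n). rewrite bP. pose proof (A_bound n Hn). lra. Qed.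

Lemma b_ms : forall q, (1 <= q)%nat -> b q <= b (q * s).
Proof. intros q Hq. apply (le_by_P _ _ (q*s)). rewrite bP.
  rewrite P_mul_s by lia. rewrite (A_rec s p h Hs2) by nia.
  rewrite Nat.Div0.mod_mul, Nat.div_mul by lia.
  rewrite plus_INR, mult_INR, <- bP. pose proof (pos_INR (h 0)). lra.
Qed.

Lemma b_msk : forall q k, (1 <= q)%nat -> b q <= b (q * s^k).
Proof. intros q k Hq. induction k as [|k IH].
  - simpl. rewrite Nat.mul_1_r. lra.
  - rewrite Nat.pow_succ_r', Nat.mul_assoc, (Nat.mul_comm q s), <- Nat.mul_assoc, (Nat.mul_comm s).
    eapply Rle_trans. apply IH. apply b_ms.
    assert (1 <= s^k)%nat by (apply Nat.neq_0_lt_0, Nat.pow_nonzero; lia). nia. Qed.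

Lemma b_succ : forall n, (1 <= n)%nat -> b n * (1 - al / INR n) <= b (S n).
Proof. intros n Hn. apply (le_by_P _ _ (S n)). rewrite bP.
  pose proof (P_ratio n Hn). pose proof (b_nonneg n).
  pose proof (A_mono s p h Hs2 Hsp Hh_inc Hhp n) as M. apply lt_INR in M.
  rewrite <- bP in M. nra.
Qed.

Lemma b_v : forall v0 k, (1 <= v0)%nat -> (1 <= v0 * s^k - 1)%nat ->
  b (v0 * s^k - 1) * (1 - al / INR (v0 * s^k - 1)) <= b v0.
Proof. intros v0 k Hv0 Hv. set (v := (v0 * s^k - 1)%nat).
  assert (Sv : S v = (v0 * s^k)%nat) by (unfold v; lia).
  pose proof (P_ratio v Hv) as R. rewrite Sv, P_pow in R by lia.
  pose proof (A_Xk s p h Hs2 Hsp Hh_inc Hhp v0 k Hv0) as X.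
  assert (X' : (A v <= p^k * A v0)%nat) by (fold v in X; nia).
  apply le_INR in X'. rewrite mult_INR, pow_INR in X'.
  rewrite <- bP, <- (bP v0) in X'.
  pose proof (b_nonneg v).
  assert (0 < INR p ^ k) by (apply pow_lt; pose proof INR_p; lra).
  apply (le_by_P _ _ v0). apply (Rmult_le_reg_l (INR p ^ k)). lra.
  pose proof (P_pos v0). nra.
Qed.
End R.

Lemma freq_acc : forall (u : nat -> R) x,
  (forall eps, 0 < eps -> forall N, exists n, (N < n)%nat /\ Rabs (u n - x) < eps) ->
  acc_point u x.
Proof.
  intros u x H.
  assert (H' : forall N k : nat, exists n, (N < n)%nat /\ Rabs (u n - x) < / (INR k + 1)).
  { intros N k. apply H. apply Rinv_0_lt_compat. pose proof (pos_INR k); lra. }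
  set (g := fun N k => proj1_sig (constructive_indefinite_description _ (H' N k))).
  assert (Hg : forall N k, (N < g N k)%nat /\ Rabs (u (g N k) - x) < / (INR k + 1)).
  { intros N k. unfold g. destruct (constructive_indefinite_description _ (H' N k)); auto. }
  set (phi := fix f k := match k with O => g O O | S k' => g (f k') (S k') end).
  exists phi. split; [|split].
  - intro k. simpl. apply Hg.
  - intro k. destruct k; simpl; pose proof (Hg 0%nat 0%nat); try pose proof (Hg (phi k) (S k)); lia.
  - intros eps Heps. destruct (INR_unbounded (/ eps)) as [k0 Hk0]. exists k0.
    intros k Hk. unfold R_dist.
    assert (Hb : Rabs (u (phi k) - x) < / (INR k + 1)).
    { destruct k; simpl; apply Hg. }
    eapply Rlt_le_trans. apply Hb.
    assert (INR k0 <= INR k) by (apply le_INR; lia).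
    assert (/ eps < INR k + 1) by lra.
    apply Rlt_le. rewrite <- (Rinv_inv eps). apply Rinv_lt_contravar.
    apply Rmult_lt_0_compat. apply Rinv_0_lt_compat; lra. pose proof (pos_INR k); lra. lra.
Qed.

Lemma ivt : forall (b : nat -> R) y d u, y <= b u -> b (u + d)%nat < y ->
  exists n, (u <= n < u + d)%nat /\ y <= b n /\ b (S n) < y.
Proof.
  intros b y d. induction d as [|d IH]; intros u H1 H2.
  - rewrite Nat.add_0_r in H2. lra.
  - destruct (Rlt_le_dec (b (S u)) y) as [L|L].
    + exists u. split; [lia|auto].
    + destruct (IH (S u) L) as [n [Hn1 Hn2]]. rewrite <- plus_n_Sm in H2. simpl. exact H2.
      exists n. split; [lia|auto].
Qed.

Section C.
Variables (s p : nat) (h : nat -> nat).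
Hypothesis Hs2 : (2 <= s)%nat.
Hypothesis Hsp : (s < p)%nat.
Hypothesis Hh_inc : forall i j, (i < j)%nat -> (j < s)%nat -> (h i < h j)%nat.
Hypothesis Hhp : forall i, (i < s)%nat -> (h i < p)%nat.
Notation b := (b_seq s p h).

Lemma core : forall m M, is_glb (range1 b) m -> is_lub (range1 b) M ->
  forall y, m < y < M -> forall eps, 0 < eps -> forall N, exists n, (N < n)%nat /\ Rabs (b n - y) < eps.
Proof.
  intros m M [Hm1 Hm2] [HM1 HM2] y [Hy1 Hy2] eps Heps N.
  assert (Hm0 : 0 <= m).
  { apply Hm2. intros z [n [_ ->]]. apply b_nonneg. }
  assert (Hu0 : exists u0, (1 <= u0)%nat /\ y < b u0).
  { apply NNPP. intro C. assert (M <= y); [|lra]. apply HM2. intros z [n [Hn ->]].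
    apply Rnot_lt_le. intro L. apply C. exists n; auto. }
  assert (Hv0 : exists v0, (1 <= v0)%nat /\ b v0 < y).
  { apply NNPP. intro C. assert (y <= m); [|lra]. apply Hm2. intros z [n [Hn ->]].
    apply Rnot_lt_le. intro L. apply C. exists n; auto. }
  destruct Hu0 as [u0 [Hu0 Hbu0]]. destruct Hv0 as [v0 [Hv0 Hbv0]].
  pose proof (al_pos s p Hs2 Hsp) as Hal. pose proof (INR_p s p Hs2 Hsp) as Hp.
  destruct (INR_unbounded (INR p * al s p / eps)) as [K HK].
  set (N' := (K + N + 1)%nat).
  assert (HN' : INR p * al s p / INR N' < eps).
  { assert (INR K <= INR N') by (apply le_INR; unfold N'; lia).
    assert (0 < INR N') by (replace 0 with (INR 0) by reflexivity; apply lt_INR; unfold N'; lia).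
    assert (E1 : INR p * al s p = (INR p * al s p / eps) * eps) by (field; lra).
    assert (E2 : INR p * al s p < INR N' * eps).
    { rewrite E1. apply Rmult_lt_compat_r; lra. }
    assert (E3 : INR p * al s p / INR N' = INR p * al s p * / INR N') by reflexivity.
    rewrite E3. apply (Rmult_lt_reg_r (INR N')). lra. rewrite Rmult_assoc, Rinv_l by lra. lra. }
  set (u := (u0 * s ^ N')%nat).
  assert (Hu : (N' < u)%nat).
  { pose proof (Nat.pow_gt_lin_r s N' ltac:(lia)). unfold u. nia. }
  assert (Hbu : y < b u) by (pose proof (b_msk s p h Hs2 Hsp u0 N' Hu0) as X; change (b_seq s p h (u0 * s ^ N')) with (b u) in X; lra).
  set (c := y * al s p / (y - b v0)).
  assert (Hc : 0 <= c).
  { unfold c. apply div_nonneg. apply Rmult_le_pos; lra. lra. }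
  destruct (INR_unbounded (al s p + c + INR u)) as [K2 HK2].
  set (v := (v0 * s ^ K2 - 1)%nat).
  assert (HvK : (K2 <= v)%nat).
  { pose proof (Nat.pow_gt_lin_r s K2 ltac:(lia)). unfold v. nia. }
  assert (HvK' : INR K2 <= INR v) by (apply le_INR; auto).
  assert (Huv : (u < v)%nat).
  { apply INR_lt. lra. }
  assert (Hbv : b v < y).
  { apply Rnot_le_lt. intro L.
    pose proof (b_v s p h Hs2 Hsp Hh_inc Hhp v0 K2 Hv0 ltac:(lia)) as B. fold v in B.
    assert (Hvp : 0 < INR v) by (pose proof (pos_INR u); lra).
    assert (E : y * (1 - al s p / INR v) <= b v * (1 - al s p / INR v)).
    { apply Rmult_le_compat_r; auto. assert (al s p / INR v < 1); [|lra].
      apply (Rmult_lt_reg_r (INR v)); auto. unfold Rdiv. rewrite Rmult_assoc, Rinv_l by lra. pose proof (pos_INR u). lra. }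
    assert (Hcv : c < INR v) by (pose proof (pos_INR u); lra).
    unfold c in Hcv.
    assert (Hcv' : y * al s p < INR v * (y - b v0)).
    { apply (Rmult_lt_reg_r (/ (y - b v0))). apply Rinv_0_lt_compat; lra.
      replace (INR v * (y - b v0) * / (y - b v0)) with (INR v) by (field; lra). exact Hcv. }
    assert (y * (1 - al s p / INR v) * INR v = y * INR v - y * al s p) by (field; lra).
    assert (y * (1 - al s p / INR v) * INR v <= b v0 * INR v) by (apply Rmult_le_compat_r; lra).
    nra. }
  destruct (ivt b y (v - u) u (Rlt_le _ _ Hbu)) as [n [Hn [Hn1 Hn2]]].
  { replace (u + (v - u))%nat with v by lia. exact Hbv. }
  exists (S n). split. lia.
  pose proof (b_succ s p h Hs2 Hsp Hh_inc Hhp n ltac:(lia)) as Bs.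
  pose proof (b_lt_p s p h Hs2 Hsp Hhp n ltac:(lia)) as Bp.
  assert (HnN : INR N' <= INR n) by (apply le_INR; lia).
  assert (0 < INR N') by (replace 0 with (INR 0) by reflexivity; apply lt_INR; unfold N'; lia).
  assert (al s p / INR n <= al s p / INR N').
  { unfold Rdiv. apply Rmult_le_compat_l. lra. apply Rinv_le_contravar; lra. }
  assert (b n * (al s p / INR n) <= INR p * (al s p / INR N')).
  { apply Rmult_le_compat; try lra. apply div_nonneg; lra. }
  assert (INR p * (al s p / INR N') = INR p * al s p / INR N') by (unfold Rdiv; ring).
  rewrite Rabs_left by lra. lra.
Qed.
End C.

Theorem theorem2 (p s : nat) (A : list nat) (h : nat -> nat)
  (Hp : (3 <= p)%nat) (Hs2 : (2 <= s)%nat) (Hsp : (s < p)%nat)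
  (HAnd : NoDup A) (HAlen : length A = s) (HAp : forall a, In a A -> (a < p)%nat)
  (Hh_inc : forall i j, (i < j)%nat -> (j < s)%nat -> (h i < h j)%nat)
  (Hh_A : forall i, (i < s)%nat -> In (h i) A) :
  exists m M : R,
    is_glb (range1 (b_seq s p h)) m /\ is_lub (range1 (b_seq s p h)) M /\
    (forall x, m <= x <= M -> acc_point (b_seq s p h) x) /\
    (forall x, acc_point (b_seq s p h) x -> m <= x <= M) /\
    (forall x eps, m <= x <= M -> 0 < eps ->
       exists n, (1 <= n)%nat /\ Rabs (b_seq s p h n - x) < eps).
Proof.
  assert (Hhp : forall i, (i < s)%nat -> (h i < p)%nat) by (intros; apply HAp, Hh_A; auto).
  set (b := b_seq s p h).
  assert (Hne : exists x, range1 b x) by (exists (b 1%nat); exists 1%nat; split; auto).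
  destruct (completeness (range1 b)) as [M HM].
  { exists (INR p). intros z [n [Hn ->]]. apply (b_lt_p s p h Hs2 Hsp Hhp n Hn). }
  { exact Hne. }
  destruct (completeness (fun z => range1 b (- z))) as [M' HM'].
  { exists 0. intros z [n [Hn E]]. pose proof (b_nonneg s p h n). fold b in H. lra. }
  { exists (- b 1%nat). exists 1%nat. split; auto. rewrite Ropp_involutive. reflexivity. }
  set (m := - M').
  assert (Hglb : is_glb (range1 b) m).
  { split.
    - intros y Hy. unfold m. assert (- y <= M'); [|lra]. apply HM'. rewrite Ropp_involutive. exact Hy.
    - intros l Hl. unfold m. assert (M' <= - l); [|lra]. apply HM'. intros z Hz.
      specialize (Hl _ Hz). lra. }
  assert (Hbd : forall n, (1 <= n)%nat -> m <= b n <= M).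
  { intros n Hn. split. apply Hglb. exists n; auto. apply HM. exists n; auto. }
  assert (Hmm : m <= M) by (pose proof (Hbd 1%nat ltac:(lia)); lra).
  assert (Hfreq : forall x, m <= x <= M -> forall eps, 0 < eps -> forall N,
            exists n, (N < n)%nat /\ Rabs (b n - x) < eps).
  { intros x Hx eps Heps N.
    destruct (Rle_lt_or_eq_dec _ _ Hmm) as [Lt|Eq].
    - set (t := Rmin (eps / 2) ((M - m) / 4)).
      assert (Ht1 : t <= eps / 2) by apply Rmin_l.
      assert (Ht2 : t <= (M - m) / 4) by apply Rmin_r.
      assert (Ht0 : 0 < t) by (apply Rmin_glb_lt; lra).
      destruct (Rlt_le_dec x ((m + M) / 2)) as [L|L].
      + assert (Hy : m < x + t < M) by (clear -Hx L Ht0 Ht2 Lt; lra).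
        destruct (core s p h Hs2 Hsp Hh_inc Hhp m M Hglb HM (x + t) Hy (eps/2) ltac:(lra) N)
          as [n [Hn1 Hn2]].
        exists n. split; auto. fold b in Hn2.
        replace (b n - x) with ((b n - (x + t)) + t) by ring.
        eapply Rle_lt_trans. apply Rabs_triang. rewrite (Rabs_right t) by lra. lra.
      + assert (Hy : m < x - t < M) by (clear -Hx L Ht0 Ht2 Lt; lra).
        destruct (core s p h Hs2 Hsp Hh_inc Hhp m M Hglb HM (x - t) Hy (eps/2) ltac:(lra) N)
          as [n [Hn1 Hn2]].
        exists n. split; auto. fold b in Hn2.
        replace (b n - x) with ((b n - (x - t)) + - t) by ring.
        eapply Rle_lt_trans. apply Rabs_triang. rewrite Rabs_Ropp, (Rabs_right t) by lra. lra.
    - exists (S N). split. lia. pose proof (Hbd (S N) ltac:(lia)).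
      replace (b (S N) - x) with 0 by lra. rewrite Rabs_R0. lra. }
  assert (Hacc : forall x, m <= x <= M -> acc_point b x).
  { intros x Hx. apply freq_acc. intros. apply Hfreq; auto. }
  exists m, M. split; [exact Hglb|]. split; [exact HM|]. split; [exact Hacc|]. split.
  - intros x [phi [H1 [H2 H3]]]. split.
    + apply Rnot_lt_le. intro L. destruct (H3 (m - x) ltac:(lra)) as [k Hk].
      specialize (Hk k (le_n k)). unfold R_dist in Hk. pose proof (Hbd (phi k) (H2 k)).
      apply Rabs_def2 in Hk. fold b in Hk. lra.
    + apply Rnot_lt_le. intro L. destruct (H3 (x - M) ltac:(lra)) as [k Hk].
      specialize (Hk k (le_n k)). unfold R_dist in Hk. pose proof (Hbd (phi k) (H2 k)).
      apply Rabs_def2 in Hk. fold b in Hk. lra.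
  - intros x eps Hx Heps. destruct (Hacc x Hx) as [phi [H1 [H2 H3]]].
    destruct (H3 eps Heps) as [k Hk]. exists (phi k). split; auto. apply (Hk k (le_n k)).
Qed.
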